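(* Let $\mathcal{A}$ be a pOC with state set $Q$ whose underlying chain $\mathcal{X}$ is strongly connected, with trend $t>0$, and assume $[p{\downarrow}]>0$ for all $p\in Q$. Let $v$ be a potential, $|v|=v_{\max}-v_{\min}$, and let $p\in Q$ satisfy $v_p=v_{\max}$. Then $$[p{\uparrow}]\ge\frac{t^3}{12(2|v|+4)^3}.$$
   Context: A pOC is $\mathcal{A}=(Q,\delta^{=0},\delta^{>0},P^{=0},P^{>0})$ with the following components. - $\delta^{>0}\subseteq Q\times\{-1,0,1\}\times Q$ are the positive rules and $\delta^{=0}\subseteq Q\times\{0,1\}\times Q$ are the zero rules. Every state has both kinds of outgoing rule. - $P^{>0}$ and $P^{=0}$ are positive probability distributions over the outgoing rules of each state. $\mathcal{M}_\mathcal{A}$ is the Markov chain on configurations $p(i)$ with the following transitions: - $p(0)\to q(c)$ with probability $P^{=0}(p,c,q)$; - for $i\ge1$, $p(i)\to q(i+c)$ with probability $P^{>0}(p,c,q)$. $[p{\uparrow}]$ is the probability that a run from $p(1)$ never reaches counter value zero, and $[p{\downarrow}]=1-[p{\uparrow}]$. $\mathcal{X}$ is the finite Markov chain on $Q$ with transition matrix $A_{pq}=\sum_cP^{>0}(p,c,q)$. With $\alpha$ its invariant distribution and $s_p=\sum_{(p,c,q)\in\delta^{>0}}P^{>0}(p,c,q)c$, the trend is $t=\alpha s$. A potential is $v\in\mathbb{R}^Q$ with $s+Av=v+\mathbf{1}t$. $v_{\max}$ and $v_{\min}$ are its largest and smallest components. *)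

(* Defs.v *)
From HB Require Import structures.
From mathcomp Require Import all_boot all_order all_algebra.
From mathcomp Require Import boolp classical_sets reals.
Set Implicit Arguments. Unset Strict Implicit. Unset Printing Implicit Defensive.
Import Order.TTheory GRing.Theory Num.Theory.
Local Open Scope ring_scope.

(* Counter updates c in {-1,0,1} are encoded by k : 'I_3 with c = k - 1. *)
Definition upd (k : 'I_3) : int := (k%:Z - 1)%R.

(* A probabilistic one-counter automaton over the finite state set Q.
   Ppos p k q = P^{>0}(p, upd k, q)  (0 if the rule is absent),
   Pzero p k q = P^{=0}(p, upd k, q) (zero rules have c in {0,1}). *)
Record pOC (R : realType) (Q : finType) := POC {
  Ppos : Q -> 'I_3 -> Q -> R;
  Pzero : Q -> 'I_3 -> Q -> R;
  Ppos_ge0 : forall p k q, 0 <= Ppos p k q;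
  Pzero_ge0 : forall p k q, 0 <= Pzero p k q;
  Ppos_sum1 : forall p, \sum_(k : 'I_3) \sum_(q : Q) Ppos p k q = 1;
  Pzero_sum1 : forall p, \sum_(k : 'I_3) \sum_(q : Q) Pzero p k q = 1;
  Pzero_nodec : forall p q, Pzero p ord0 q = 0
}.

Section Defs.
Variables (R : realType) (Q : finType) (A : pOC R Q).

(* Probability, in M_A, that a run from p(i) with i >= 1 visits counter value 0
   within n steps (for i = 0 it is 1).  Only positive rules are used before
   the first visit to 0. *)
Fixpoint hit (n : nat) (p : Q) (i : nat) : R :=
  if i == 0%N then 1 else
  match n with
  | 0%N => 0
  | n'.+1 => \sum_(k : 'I_3) \sum_(q : Q) Ppos A p k q * hit n' q (i + k - 1)%N
  end.

(* [p down]: probability that a run from p(1) ever reaches counter value 0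
   (the supremum of the nondecreasing sequence of finite-horizon probabilities). *)
Definition pdown (p : Q) : R := sup (range (fun n => hit n p 1%N)).
Definition pup (p : Q) : R := 1 - pdown p.

Definition Amat (p q : Q) : R := \sum_(k : 'I_3) Ppos A p k q.
Definition sdrift (p : Q) : R :=
  \sum_(k : 'I_3) \sum_(q : Q) Ppos A p k q * (upd k)%:~R.

Definition strongly_connected : Prop :=
  forall p q, connect (fun x y => 0 < Amat x y) p q.

Definition invariant_distribution (alpha : Q -> R) : Prop :=
  (forall p, 0 <= alpha p) /\ \sum_p alpha p = 1 /\
  (forall q, \sum_p alpha p * Amat p q = alpha q).

Definition trend (alpha : Q -> R) : R := \sum_p alpha p * sdrift p.

Definition potential (t : R) (v : Q -> R) : Prop :=
  forall p, sdrift p + \sum_q Amat p q * v q = v p + t.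

End Defs.

Definition vmax (R : realType) (Q : finType) (x0 : Q) (v : Q -> R) : R :=
  \big[Num.max/v x0]_(q : Q) v q.
Definition vmin (R : realType) (Q : finType) (x0 : Q) (v : Q -> R) : R :=
  \big[Num.min/v x0]_(q : Q) v q.

(* Main.v *)
Require Import Defs.
From HB Require Import structures.
From mathcomp Require Import all_boot all_order all_algebra.
From mathcomp Require Import boolp classical_sets reals.
From mathcomp Require Import sequences exp.
From mathcomp Require Import ring lra.
Import Order.TTheory GRing.Theory Num.Theory.
Local Open Scope ring_scope.

Section Proof.
Variables (R : realType) (Q : finType) (A : pOC R Q).

Lemma bigmax_ge (x0 : R) (F : Q -> R) q : F q <= \big[Num.max/x0]_(i : Q) F i.
Proof.
have H : forall r : seq Q, q \in r -> F q <= \big[Num.max/x0]_(i <- r) F i.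
  elim=> [//|a r IH]; rewrite in_cons big_cons le_max => /orP [/eqP->|Hr].
    by rewrite lexx.
  by rewrite IH ?orbT.
exact: H (mem_index_enum q).
Qed.

Lemma bigmin_le (x0 : R) (F : Q -> R) q : \big[Num.min/x0]_(i : Q) F i <= F q.
Proof.
have H : forall r : seq Q, q \in r -> \big[Num.min/x0]_(i <- r) F i <= F q.
  elim=> [//|a r IH]; rewrite in_cons big_cons ge_min => /orP [/eqP->|Hr].
    by rewrite lexx.
  by rewrite IH ?orbT.
exact: H (mem_index_enum q).
Qed.

Lemma expR_le2 (x : R) : x <= 1/2 -> expR x <= 1 + x + 2 * x ^+ 2.
Proof.
move=> hx.
have h1 := expR_ge1Dx (- x).
have hpos : 0 < 1 - x by lra.
rewrite expRN in h1.
have he := expR_gt0 x.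
have : (1 - x) * expR x <= 1.
  have := ler_wpM2r (ltW he) h1. by rewrite mulVf ?gt_eqF.
move=> h2.
have h3 : (1 - x) * (1 + x + 2 * x ^+ 2) >= 1.
  have : 0 <= x ^+ 2 * (1 - 2 * x) by apply: mulr_ge0; [exact: sqr_ge0|lra].
  move=> h. nra.
nra.
Qed.

Lemma upd_bounds (k : 'I_3) : -1 <= (upd k)%:~R :> R /\ (upd k)%:~R <= 1 :> R.
Proof.
rewrite /upd; case: k => [[|[|[|//]]]] /= _; rewrite ?intrD ?intrN /=; split; lra.
Qed.

Lemma sumP1 q : \sum_(k : 'I_3) \sum_(q' : Q) Ppos A q k q' = 1.
Proof. exact: Ppos_sum1. Qed.

Lemma sdrift_le1 q : sdrift A q <= 1.
Proof.
rewrite /sdrift -[X in _ <= X](sumP1 q); apply: ler_sum => k _; apply: ler_sum => q' _.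
have [_ h] := upd_bounds k.
by apply: (le_trans (ler_wpM2l (Ppos_ge0 A q k q') h)); rewrite mulr1.
Qed.

Lemma trend_le1 alpha : invariant_distribution A alpha -> trend A alpha <= 1.
Proof.
move=> [h0 [h1 _]]; rewrite /trend -[X in _ <= X]h1; apply: ler_sum => q _.
by apply: (le_trans (ler_wpM2l (h0 q) (sdrift_le1 q))); rewrite mulr1.
Qed.

Lemma drift_sum t v q : potential A t v ->
  \sum_(k : 'I_3) \sum_(q' : Q) Ppos A q k q' * ((upd k)%:~R + v q' - v q) = t.
Proof.
move=> hp.
have e : forall k q', Ppos A q k q' * ((upd k)%:~R + v q' - v q) =
   Ppos A q k q' * (upd k)%:~R + Ppos A q k q' * v q' - Ppos A q k q' * v q.
  by move=> k q'; rewrite !mulrDr mulrN.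
under eq_bigr => k _ do under eq_bigr => q' _ do rewrite e.
under eq_bigr => k _ do rewrite sumrB big_split /=.
rewrite sumrB big_split /=.
rewrite -/(sdrift A q).
have -> : \sum_(i < 3) \sum_(i0 : Q) Ppos A q i i0 * v i0 = \sum_q' Amat A q q' * v q'.
  rewrite exchange_big /=; apply: eq_bigr => q' _; by rewrite /Amat mulr_suml.
have -> : \sum_(i < 3) \sum_(i0 : Q) Ppos A q i i0 * v q = v q.
  by rewrite -[RHS]mul1r -[in RHS](sumP1 q) mulr_suml; apply: eq_bigr => k _; rewrite mulr_suml.
rewrite hp; lra.
Qed.

Lemma hit_le (lam m : R) (v : Q -> R) :
  (forall q, v q <= m) -> 0 <= lam ->
  (forall q, \sum_(k : 'I_3) \sum_(q' : Q)
      Ppos A q k q' * expR (- lam * ((upd k)%:~R + v q' - v q)) <= 1) ->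
  forall n q i, hit A n q i <= expR (- lam * (i%:R + v q - m)).
Proof.
move=> hm hl H; elim=> [|n IH] q [|i].
- rewrite /=; apply: le_trans (expR_ge1Dx _); rewrite add0r.
  have := hm q; move=> h. have : 0 <= lam * (m - v q) by apply: mulr_ge0; lra.
  move=> h'. rewrite mulNr -mulrN opprB. lra.
- by rewrite /= ltW // expR_gt0.
- rewrite /=; apply: le_trans (expR_ge1Dx _); rewrite add0r.
  have := hm q; move=> h. have : 0 <= lam * (m - v q) by apply: mulr_ge0; lra.
  move=> h'. rewrite mulNr -mulrN opprB. lra.
- rewrite /=.
  set f := expR (- lam * ((i.+1)%:R + v q - m)).
  have hf : 0 <= f by rewrite ltW // expR_gt0.
  apply: (@le_trans _ _ (\sum_(k < 3) \sum_(q' : Q)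
      Ppos A q k q' * (f * expR (- lam * ((upd k)%:~R + v q' - v q))))).
    apply: ler_sum => k _; apply: ler_sum => q' _.
    apply: ler_wpM2l; first exact: Ppos_ge0.
    apply: (le_trans (IH _ _)).
    rewrite /f -expRD.
    have -> : ((i.+1 + k - 1)%N%:R : R) = i.+1%:R + (upd k)%:~R.
      rewrite subn1 addSn /= /upd rmorphB /= natrD mulrSr; lra.
    suff -> : - lam * ((i.+1)%:R + (upd k)%:~R + v q' - m) =
      - lam * ((i.+1)%:R + v q - m) + - lam * ((upd k)%:~R + v q' - v q) by [].
    rewrite -mulrDr; congr (_ * _); lra.
  under eq_bigr => k _ do under eq_bigr => q' _ do rewrite mulrCA.
  under eq_bigr => k _ do rewrite -mulr_sumr.
  rewrite -mulr_sumr -{2}(mulr1 f); apply: ler_wpM2l => //.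
Qed.

End Proof.
Arguments bigmax_ge {R Q}.
Arguments bigmin_le {R Q}.
Arguments expR_le2 {R}.
Arguments upd_bounds {R}.
Arguments sumP1 {R Q}.
Arguments sdrift_le1 {R Q}.
Arguments trend_le1 {R Q}.
Arguments drift_sum {R Q}.
Arguments hit_le {R Q A lam m v}.

Theorem mainTheorem16 (R : realType) (Q : finType) (A : pOC R Q)
  (alpha : Q -> R) (v : Q -> R) (p : Q) :
  strongly_connected A ->
  invariant_distribution A alpha ->
  0 < trend A alpha ->
  (forall q, 0 < pdown A q) ->
  potential A (trend A alpha) v ->
  v p = vmax p v ->
  pup A p >= (trend A alpha) ^+ 3 /
              (12 * (2 * (vmax p v - vmin p v) + 4) ^+ 3).
Proof.
move=> _ hinv ht _ hpot hvp.
set t := trend A alpha in ht hpot *.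
have t1 : t <= 1 by exact: trend_le1.
set M := vmax p v - vmin p v.
have hmax : forall q, v q <= vmax p v by move=> q; exact: bigmax_ge.
have hmin : forall q, vmin p v <= v q by move=> q; exact: bigmin_le.
have M0 : 0 <= M by have := hmax p; have := hmin p; rewrite /M; lra.
set N := 1 + M.
have N1 : 1 <= N by rewrite /N; lra.
set lam := t / (2 * N ^+ 2).
have N2 : 0 < 2 * N ^+ 2 by nra.
have hlam : lam * (2 * N ^+ 2) = t by rewrite /lam divfK ?gt_eqF.
have lam0 : 0 < lam by rewrite /lam divr_gt0.
have lamN : lam * N <= 1/2 by nra.
have H : forall q, \sum_(k : 'I_3) \sum_(q' : Q)
      Ppos A q k q' * expR (- lam * ((upd k)%:~R + v q' - v q)) <= 1.
  move=> q.
  apply: (@le_trans _ _ (\sum_(k : 'I_3) \sum_(q' : Q) Ppos A q k q' *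
      (1 - lam * ((upd k)%:~R + v q' - v q) + 2 * (lam ^+ 2 * N ^+ 2)))).
    apply: ler_sum => k _; apply: ler_sum => q' _.
    apply: ler_wpM2l; first exact: Ppos_ge0.
    have [u1 u2] := upd_bounds (R:=R) k.
    have := hmax q; have := hmin q; have := hmax q'; have := hmin q'.
    rewrite -/M. move=> a1 a2 a3 a4.
    set D := (upd k)%:~R + v q' - v q.
    have D1 : D <= N by rewrite /D /N /M; lra.
    have D2 : - N <= D by rewrite /D /N /M; lra.
    have hLD : 0 <= lam * (D + N) by apply: mulr_ge0; lra.
    have hLD2 : 0 <= lam * (N - D) by apply: mulr_ge0; lra.
    apply: (le_trans (expR_le2 (- lam * D) _)); first by nra.
    have : (- lam * D) ^+ 2 <= lam ^+ 2 * N ^+ 2 by nra.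
    lra.
  have e : forall k q', Ppos A q k q' *
      (1 - lam * ((upd k)%:~R + v q' - v q) + 2 * (lam ^+ 2 * N ^+ 2)) =
      Ppos A q k q' * (1 + 2 * (lam ^+ 2 * N ^+ 2)) -
      lam * (Ppos A q k q' * ((upd k)%:~R + v q' - v q)).
    by move=> k q'; ring.
  under eq_bigr => k _ do under eq_bigr => q' _ do rewrite e.
  under eq_bigr => k _ do rewrite sumrB -mulr_suml -mulr_sumr.
  rewrite sumrB -mulr_suml -mulr_sumr sumP1 (drift_sum A t v q hpot).
  have : lam * t = 2 * (lam ^+ 2 * N ^+ 2) by rewrite -hlam; ring.
  lra.
have hd : pdown A p <= expR (- lam).
  apply: ge_sup; first by exists (hit A 0 p 1); exists 0%N.
  move=> _ [n _ <-]. apply: (le_trans (@hit_le R Q A lam (vmax p v) v hmax (ltW lam0) H n p 1)).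
  by rewrite hvp addrK mulr1.
set e := expR (- lam) in hd.
have he : e * (1 + lam) <= 1.
  have h := expR_ge1Dx lam.
  have hm : e * expR lam = 1 by rewrite /e -expRD addNr expR0.
  by have := ler_wpM2l (ltW (expR_gt0 (-lam))) h; rewrite -/e hm.
have e0 : 0 < e by exact: expR_gt0.
rewrite /pup ler_pdivrMr; last by apply: mulr_gt0 => //; apply: exprn_gt0; lra.
set K := (2 * M + 4) ^+ 3.
have K1 : N ^+ 2 <= K.
  rewrite /K; have h2 : N <= 2 * M + 4 by rewrite /N; lra.
  have h3 : N ^+ 2 <= (2 * M + 4) ^+ 2 by rewrite ler_sqr ?nnegrE; lra.
  have : (2 * M + 4) ^+ 2 <= (2 * M + 4) ^+ 3.
    rewrite [X in _ <= X]exprS; have hs := sqr_ge0 (2 * M + 4); nra.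
  lra.
have X0 : (1 - e) * (3/2) >= lam by nra.
have t3 : t ^+ 3 <= t by nra.
have : (1 - pdown A p) * (12 * K) >= (1 - e) * (12 * K).
  apply: ler_wpM2r; last lra. apply: mulr_ge0 => //. rewrite /K; apply: exprn_ge0; lra.
have : (1 - e) * (12 * K) >= t.
  rewrite -hlam. nra.
lra.
Qed.
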